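(* For each $n=1,\dots,N$: (i) $h_n(y,t)=h_n(2m_n-y,t)$ for all $y,t$ (where defined); in particular $h_n(\overline m_n,\cdot)=h_n(\underline m_n,\cdot)$; (ii) $y\mapsto h_n(y,t)$ is strictly increasing for $y\le\underline m_n$ and strictly decreasing for $y\ge\overline m_n$. Here for $n=1$ (resp. $n=N$), $\underline m_n=\overline m_n=-\infty$ (resp. $+\infty$).
   Context: $N<\infty$. $Z$ under $\overline{\mathbb{P}}$ is the difference of two independent Poisson processes with intensity $\beta>0$ (on $\mathbb{Z}$). $(a_n)_{n=1}^{N+1}$ is strictly increasing in $\mathbb{Z}\cup\{\pm\infty\}$, $a_1=-\infty$, $a_{N+1}=\infty$, $\bigcup_n[a_n,a_{n+1})=\mathbb{Z}\cup\{-\infty\}$, with $m_n=(a_n+a_{n+1}-1)/2\notin\mathbb{Z}$; $\underline m_n=\lfloor m_n\rfloor$, $\overline m_n=\lceil m_n\rceil$. $h_n(y,t)=\overline{\mathbb{P}}(Z_1\in[a_n,a_{n+1})\mid Z_t=y)$ for $y\in\mathbb{Z}$, $t\in[0,1]$. *)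

(* Defs.v *)
From Stdlib Require Import Reals ZArith Lia Lra.
From Coquelicot Require Import Coquelicot.
Open Scope R_scope.

Inductive zbar : Type := ZNinf | ZFin (z : Z) | ZPinf.

Definition zlt (u v : zbar) : Prop :=
  match u, v with
  | ZNinf, ZNinf => False
  | ZNinf, _ => True
  | ZFin x, ZFin y => (x < y)%Z
  | ZFin _, ZPinf => True
  | _, _ => False
  end.

Definition zle (u v : zbar) : Prop := zlt u v \/ u = v.

Definition inI (lo hi : zbar) (z : Z) : bool :=
  match lo with ZNinf => true | ZFin x => (x <=? z)%Z | ZPinf => false end &&
  match hi with ZNinf => false | ZFin x => (z <? x)%Z | ZPinf => true end.

Definition sumZ (f : Z -> R) : R :=
  Series (fun k => f (Z.of_nat k)) + Series (fun k => f (- Z.of_nat k - 1)%Z).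

Definition pois (lam : R) (k : Z) : R :=
  if (k <? 0)%Z then 0
  else exp (- lam) * lam ^ (Z.to_nat k) / INR (fact (Z.to_nat k)).

(** Law of Z_s - Z_0: difference of two independent Poisson(beta s) variables,
    P(N1 - N2 = j) = sum_l P(N2 = l) P(N1 = l + j). *)
Definition skellam (beta s : R) (j : Z) : R :=
  Series (fun l => pois (beta * s) (Z.of_nat l) * pois (beta * s) (Z.of_nat l + j)%Z).

(** h_n(y,t) = P(Z_1 ∈ [a_n, a_{n+1}) | Z_t = y)
             = sum_{z ∈ [a_n,a_{n+1})} P(Z_1 - Z_t = z - y)   (Markov, stationary increments). *)
Definition h (beta : R) (a : nat -> zbar) (n : nat) (y : Z) (t : R) : R :=
  sumZ (fun z => if inI (a n) (a (S n)) z
                 then skellam beta (1 - t) (z - y)%Z else 0).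

(** underline m_n = floor m_n and overline m_n = ceil m_n, with m_n = (a_n + a_{n+1} - 1)/2;
    convention: -∞ if a_n = -∞ (n = 1), +∞ if a_{n+1} = +∞ (n = N). *)
Definition m_low (a : nat -> zbar) (n : nat) : zbar :=
  match a n, a (S n) with
  | ZFin x, ZFin y => ZFin ((x + y - 2) / 2)%Z
  | ZNinf, _ => ZNinf
  | _, _ => ZPinf
  end.

Definition m_up (a : nat -> zbar) (n : nat) : zbar :=
  match a n, a (S n) with
  | ZFin x, ZFin y => ZFin ((x + y) / 2)%Z
  | ZNinf, _ => ZNinf
  | _, _ => ZPinf
  end.

(* Main.v *)
Require Import Defs.
From Stdlib Require Import Reals ZArith Lia Lra.
From Coquelicot Require Import Coquelicot.
Open Scope R_scope.
Definition P (lam : R) (l : nat) : R := exp (- lam) * lam ^ l / INR (fact l).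

Lemma pois_nat lam l : pois lam (Z.of_nat l) = P lam l.
Proof.
  unfold pois, P. replace (Z.of_nat l <? 0)%Z with false by (symmetry; apply Z.ltb_ge; lia).
  now rewrite Nat2Z.id.
Qed.

Lemma pois_neg lam k : (k < 0)%Z -> pois lam k = 0.
Proof. intros H; unfold pois. now rewrite (proj2 (Z.ltb_lt _ _) H). Qed.

Lemma INR_fact_pos n : 0 < INR (fact n).
Proof. apply INR_fact_lt_0. Qed.

Lemma P_nonneg lam l : 0 <= lam -> 0 <= P lam l.
Proof.
  intros H; unfold P, Rdiv.
  apply Rmult_le_pos; [apply Rmult_le_pos; [left; apply exp_pos| now apply pow_le] |].
  left; apply Rinv_0_lt_compat, INR_fact_pos.
Qed.

Lemma pois_nonneg lam k : 0 <= lam -> 0 <= pois lam k.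
Proof.
  intros H. destruct (Z_lt_le_dec k 0).
  - rewrite pois_neg by lia; lra.
  - rewrite <- (Z2Nat.id k) by lia. rewrite pois_nat. now apply P_nonneg.
Qed.

Lemma term_le_sum (f : nat -> R) k : (forall i, 0 <= f i) -> f k <= sum_f_R0 f k.
Proof.
  intros Hf. destruct k; simpl; [lra|].
  pose proof (cond_pos_sum f k Hf). lra.
Qed.

Lemma pow_fact_le_exp x k : 0 <= x -> x ^ k / INR (fact k) <= exp x.
Proof.
  intros Hx. eapply Rle_trans; [|apply exp_ge_taylor; exact Hx].
  apply (term_le_sum (fun k => x ^ k / INR (fact k))).
  intros i. unfold Rdiv. apply Rmult_le_pos; [now apply pow_le|].
  left; apply Rinv_0_lt_compat, INR_fact_pos.
Qed.

Lemma P_le1 lam l : 0 <= lam -> P lam l <= 1.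
Proof.
  intros H. unfold P. unfold Rdiv. rewrite Rmult_assoc.
  rewrite (exp_Ropp lam).
  pose proof (pow_fact_le_exp lam l H). unfold Rdiv in H0.
  pose proof (exp_pos lam).
  apply (Rmult_le_reg_l (exp lam)); auto.
  rewrite <- Rmult_assoc, Rinv_r by lra. lra.
Qed.

Lemma pois_le1 lam k : 0 <= lam -> pois lam k <= 1.
Proof.
  intros H. destruct (Z_lt_le_dec k 0).
  - rewrite pois_neg by lia; lra.
  - rewrite <- (Z2Nat.id k) by lia. rewrite pois_nat. now apply P_le1.
Qed.

Lemma ex_series_exp c : ex_series (fun k => c ^ k / INR (fact k)).
Proof.
  pose proof (is_exp_Reals c) as H.
  eexists. eapply is_series_ext; [|exact H].
  intros n. simpl. rewrite pow_n_pow. unfold scal; simpl. unfold mult; simpl. unfold Rdiv. lra.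
Qed.

Lemma ex_series_P lam : ex_series (P lam).
Proof.
  unfold P. eapply ex_series_ext.
  { intros n. instantiate (1 := fun n => (lam ^ n / INR (fact n)) * exp (- lam)). simpl. unfold Rdiv. ring. }
  apply ex_series_scal_r. apply ex_series_exp.
Qed.
Definition summableZ (f : Z -> R) :=
  ex_series (fun k => f (Z.of_nat k)) /\ ex_series (fun k => f (- Z.of_nat k - 1)%Z).

Lemma summableZ_ext f g : (forall z, f z = g z) -> summableZ f -> summableZ g.
Proof.
  intros E [H1 H2]; split.
  - eapply ex_series_ext; [|exact H1]. intros; simpl; apply E.
  - eapply ex_series_ext; [|exact H2]. intros; simpl; apply E.
Qed.

Lemma sumZ_ext f g : (forall z, f z = g z) -> sumZ f = sumZ g.
Proof.
  intros E; unfold sumZ. f_equal; apply Series_ext; intros; apply E.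
Qed.

Lemma summableZ_shift1 f : summableZ f <-> summableZ (fun z => f (z + 1)%Z).
Proof.
  unfold summableZ. split; intros [H1 H2]; split.
  - eapply ex_series_ext; [|apply ex_series_incr_1 in H1; exact H1].
    intros n; cbv beta. f_equal. lia.
  - apply ex_series_incr_1. eapply ex_series_ext; [|exact H2].
    intros n; cbv beta. f_equal. lia.
  - apply ex_series_incr_1. eapply ex_series_ext; [|exact H1].
    intros n; cbv beta. f_equal. lia.
  - apply ex_series_incr_1 in H2. eapply ex_series_ext; [|exact H2].
    intros n; cbv beta. f_equal. lia.
Qed.

Lemma sumZ_shift1 f : summableZ f -> sumZ (fun z => f (z + 1)%Z) = sumZ f.
Proof.
  intros [H1 H2]. unfold sumZ.
  assert (E1 : Series (fun k => f (Z.of_nat k)) = f 0%Z + Series (fun k => f (Z.of_nat k + 1)%Z)).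
  { rewrite Series_incr_1 by exact H1. f_equal. all: try (apply Series_ext; intros; cbv beta; f_equal; lia). all: try (f_equal; simpl; lia). }
  assert (H2' : ex_series (fun k => f (- Z.of_nat k - 1 + 1)%Z)).
  { apply ex_series_incr_1. eapply ex_series_ext; [|exact H2]. intros n; cbv beta. f_equal. lia. }
  assert (E2 : Series (fun k => f (- Z.of_nat k - 1 + 1)%Z) = f 0%Z + Series (fun k => f (- Z.of_nat k - 1)%Z)).
  { rewrite Series_incr_1 by exact H2'. f_equal. all: try (apply Series_ext; intros; cbv beta; f_equal; lia). all: try (f_equal; simpl; lia). }
  rewrite E1, E2. ring.
Qed.

Lemma shift_nat m : forall f, summableZ f ->
  summableZ (fun z => f (z + Z.of_nat m)%Z) /\ sumZ (fun z => f (z + Z.of_nat m)%Z) = sumZ f.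
Proof.
  induction m; intros f Hf.
  - split.
    + eapply summableZ_ext; [|exact Hf]. intros; simpl; f_equal; lia.
    + apply sumZ_ext. intros; cbv beta; f_equal; lia.
  - destruct (IHm f Hf) as [S1 E1].
    pose proof (proj1 (summableZ_shift1 _) S1) as S2.
    split.
    + eapply summableZ_ext; [|exact S2]. intros; simpl; f_equal; lia.
    + rewrite <- E1, <- (sumZ_shift1 _ S1). apply sumZ_ext. intros; cbv beta; f_equal; lia.
Qed.

Lemma shift_negnat m : forall f, summableZ f ->
  summableZ (fun z => f (z - Z.of_nat m)%Z) /\ sumZ (fun z => f (z - Z.of_nat m)%Z) = sumZ f.
Proof.
  induction m; intros f Hf.
  - split.
    + eapply summableZ_ext; [|exact Hf]. intros; simpl; f_equal; lia.
    + apply sumZ_ext. intros; cbv beta; f_equal; lia.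
  - destruct (IHm f Hf) as [S1 E1].
    set (g := fun z => f (z - Z.of_nat (S m))%Z).
    assert (S2 : summableZ g).
    { apply summableZ_shift1. eapply summableZ_ext; [|exact S1]. intros; unfold g; f_equal; lia. }
    split; [exact S2|].
    rewrite <- E1, <- (sumZ_shift1 _ S2). apply sumZ_ext. intros; unfold g; f_equal; lia.
Qed.

Lemma shiftZ c f : summableZ f ->
  summableZ (fun z => f (z + c)%Z) /\ sumZ (fun z => f (z + c)%Z) = sumZ f.
Proof.
  intros Hf. destruct (Z_le_gt_dec 0 c).
  - destruct (shift_nat (Z.to_nat c) f Hf) as [A B].
    rewrite Z2Nat.id in A, B by lia. auto.
  - destruct (shift_negnat (Z.to_nat (- c)) f Hf) as [A B].
    rewrite Z2Nat.id in A, B by lia. split.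
    + eapply summableZ_ext; [|exact A]. intros; cbv beta; f_equal; lia.
    + rewrite <- B. apply sumZ_ext. intros; cbv beta; f_equal; lia.
Qed.

Lemma reflZ c f : summableZ f ->
  summableZ (fun z => f (c - z)%Z) /\ sumZ (fun z => f (c - z)%Z) = sumZ f.
Proof.
  intros Hf. destruct (shiftZ (c + 1) f Hf) as [[A1 A2] B].
  split.
  - split.
    + eapply ex_series_ext; [|exact A2]. intros; simpl; f_equal; lia.
    + eapply ex_series_ext; [|exact A1]. intros; simpl; f_equal; lia.
  - rewrite <- B. unfold sumZ. rewrite Rplus_comm. f_equal; apply Series_ext; intros; cbv beta; f_equal; lia.
Qed.

Lemma summableZ_minus f g : summableZ f -> summableZ g -> summableZ (fun z => f z - g z).
Proof.
  intros [A1 A2] [B1 B2]; split; apply (ex_series_minus (V := R_NormedModule)); auto.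
Qed.

Lemma sumZ_minus f g : summableZ f -> summableZ g -> sumZ (fun z => f z - g z) = sumZ f - sumZ g.
Proof.
  intros [A1 A2] [B1 B2]; unfold sumZ. rewrite !Series_minus by auto. ring.
Qed.

Lemma Series_zero : Series (fun _ => 0) = 0.
Proof.
  transitivity (Series (fun n => 0 * (fun _ => 1) n)).
  - apply Series_ext; intros; ring.
  - rewrite (Series_scal_l 0 (fun _ => 1)). ring.
Qed.

Lemma ex_series_zero : ex_series (fun _ : nat => 0).
Proof.
  exists 0. pose proof (is_series_scal_r 0 (fun n => (/2) ^ n) _ (is_series_geom (/2) ltac:(rewrite Rabs_pos_eq; lra))).
  eapply is_series_ext; [|rewrite Rmult_0_r in H; exact H]. intros; simpl; ring.
Qed.

Lemma sumZ_point0 v : sumZ (fun z => if Z.eqb z 0 then v else 0) = v.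
Proof.
  unfold sumZ.
  assert (A : Series (fun k => if Z.eqb (Z.of_nat k) 0 then v else 0) = v).
  { rewrite Series_incr_1.
    - replace (Series (fun k => if Z.eqb (Z.of_nat (S k)) 0 then v else 0)) with 0.
      + simpl; ring.
      + symmetry. transitivity (Series (fun _ : nat => 0)); [|apply Series_zero].
        apply Series_ext. intros n. destruct (Z.eqb_spec (Z.of_nat (S n)) 0); [lia|reflexivity].
    - apply ex_series_incr_1. eapply ex_series_ext; [|exact ex_series_zero].
      intros n. simpl. destruct (Z.eqb_spec (Z.pos (Pos.of_succ_nat n)) 0); [lia|reflexivity]. }
  assert (B : Series (fun k => if Z.eqb (- Z.of_nat k - 1) 0 then v else 0) = 0).
  { transitivity (Series (fun _ : nat => 0)); [|apply Series_zero]. apply Series_ext. intros n. destruct (Z.eqb_spec (- Z.of_nat n - 1) 0); [lia|reflexivity]. }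
  rewrite A, B. ring.
Qed.

Lemma summableZ_point0 v : summableZ (fun z => if Z.eqb z 0 then v else 0).
Proof.
  split.
  - apply ex_series_incr_1. eapply ex_series_ext; [|exact ex_series_zero].
    intros n. simpl. destruct (Z.eqb_spec (Z.pos (Pos.of_succ_nat n)) 0); [lia|reflexivity].
  - eapply ex_series_ext; [|exact ex_series_zero].
    intros n. destruct (Z.eqb_spec (- Z.of_nat n - 1) 0); [lia|reflexivity].
Qed.

Lemma sumZ_point c v : sumZ (fun z => if Z.eqb z c then v else 0) = v.
Proof.
  destruct (shiftZ (- c) _ (summableZ_point0 v)) as [A B].
  transitivity (sumZ (fun z => if Z.eqb z 0 then v else 0)); [|apply sumZ_point0].
  rewrite <- B. apply sumZ_ext. intros z.
  destruct (Z.eqb_spec z c), (Z.eqb_spec (z + - c) 0); auto; lia.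
Qed.

Lemma summableZ_point c v : summableZ (fun z => if Z.eqb z c then v else 0).
Proof.
  destruct (shiftZ (- c) _ (summableZ_point0 v)) as [A B].
  eapply summableZ_ext; [|exact A]. intros z.
  destruct (Z.eqb_spec z c), (Z.eqb_spec (z + - c) 0); auto; lia.
Qed.

Lemma summableZ_le f g : summableZ g -> (forall z, Rabs (f z) <= g z) -> summableZ f.
Proof.
  intros [A1 A2] H; split.
  - apply (ex_series_le (V := R_CompleteNormedModule) _ (fun k => g (Z.of_nat k))); [|exact A1].
    intros n; apply H.
  - apply (ex_series_le (V := R_CompleteNormedModule) _ (fun k => g (- Z.of_nat k - 1)%Z)); [|exact A2].
    intros n; apply H.
Qed.

Lemma fact_mul_le l j : (fact l * fact j <= fact (l + j))%nat.
Proof.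
  induction j.
  - rewrite Nat.add_0_r. simpl. lia.
  - rewrite Nat.add_succ_r. change (fact (S j)) with (S j * fact j)%nat.
    change (fact (S (l + j))) with (S (l + j) * fact (l + j))%nat. nia.
Qed.

Lemma Series_nonneg a : (forall n, 0 <= a n) -> ex_series a -> 0 <= Series a.
Proof.
  intros H E. rewrite <- Series_zero. apply Series_le; auto. intros; split; auto; lra.
Qed.

Lemma normR x : norm x = Rabs x.
Proof. reflexivity. Qed.

Lemma skel_ex lam z : 0 <= lam ->
  ex_series (fun l => pois lam (Z.of_nat l) * pois lam (Z.of_nat l + z)).
Proof.
  intros H. apply (ex_series_le (V := R_CompleteNormedModule) _ (P lam)); [|apply ex_series_P].
  intros n. rewrite normR, pois_nat. pose proof (P_nonneg lam n H). pose proof (pois_nonneg lam (Z.of_nat n + z) H).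
  pose proof (pois_le1 lam (Z.of_nat n + z) H).
  rewrite Rabs_pos_eq by (apply Rmult_le_pos; auto).
  rewrite <- (Rmult_1_r (P lam n)) at 2. apply Rmult_le_compat_l; auto.
Qed.

Lemma skel_nat b s j : skellam b s (Z.of_nat j) = Series (fun l => P (b*s) l * P (b*s) (l + j)).
Proof.
  unfold skellam. apply Series_ext. intros l. rewrite <- Nat2Z.inj_add, !pois_nat. reflexivity.
Qed.

Lemma skel_negnat b s j : skellam b s (- Z.of_nat j) = skellam b s (Z.of_nat j).
Proof.
  rewrite skel_nat. unfold skellam. rewrite (Series_incr_n_aux _ j).
  - apply Series_ext. intros k.
    replace (Z.of_nat (j + k) + - Z.of_nat j)%Z with (Z.of_nat k) by lia.
    rewrite !pois_nat. rewrite (Nat.add_comm j k). ring.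
  - intros k Hk. rewrite (pois_neg _ (Z.of_nat k + - Z.of_nat j)) by lia. ring.
Qed.

Lemma skel_sym b s z : skellam b s (- z) = skellam b s z.
Proof.
  destruct (Z_le_gt_dec 0 z).
  - rewrite <- (Z2Nat.id z) by lia. apply skel_negnat.
  - assert (E : z = (- Z.of_nat (Z.to_nat (- z)))%Z) by lia.
    rewrite E, Z.opp_involutive. symmetry; apply skel_negnat.
Qed.

Lemma skel_nonneg b s z : 0 <= b * s -> 0 <= skellam b s z.
Proof.
  intros H. unfold skellam. apply Series_nonneg; [|now apply skel_ex].
  intros n. apply Rmult_le_pos; apply pois_nonneg; auto.
Qed.

Lemma P_shift_le lam l j : 0 <= lam -> P lam (l + j) <= P lam l * (lam ^ j / INR (fact j)).
Proof.
  intros H. unfold P. rewrite pow_add. unfold Rdiv.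
  pose proof (fact_mul_le l j) as F. apply le_INR in F. rewrite mult_INR in F.
  pose proof (INR_fact_pos l). pose proof (INR_fact_pos j). pose proof (INR_fact_pos (l+j)).
  pose proof (exp_pos (- lam)). pose proof (pow_le lam l H). pose proof (pow_le lam j H).
  assert (/ INR (fact (l + j)) <= / INR (fact l) * / INR (fact j)).
  { rewrite <- Rinv_mult. apply Rinv_le_contravar; auto. apply Rmult_lt_0_compat; auto. }
  replace (exp (- lam) * (lam ^ l * lam ^ j) * / INR (fact (l + j))) with
    ((exp (- lam) * lam ^ l * lam ^ j) * / INR (fact (l + j))) by ring.
  replace (exp (- lam) * lam ^ l * / INR (fact l) * (lam ^ j * / INR (fact j))) with
    ((exp (- lam) * lam ^ l * lam ^ j) * (/ INR (fact l) * / INR (fact j))) by ring.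
  apply Rmult_le_compat_l; auto. apply Rmult_le_pos; auto. apply Rmult_le_pos; lra.
Qed.

Lemma skel_bound b s j : 0 <= b * s ->
  skellam b s (Z.of_nat j) <= ((b*s) ^ j / INR (fact j)) * skellam b s 0.
Proof.
  intros H.
  rewrite skel_nat. replace 0%Z with (Z.of_nat 0) by reflexivity. rewrite skel_nat.
  rewrite (Rmult_comm ((b*s) ^ j / INR (fact j))), <- Series_scal_r.
  apply Series_le.
  - intros l. split; [apply Rmult_le_pos; apply P_nonneg; auto|].
    rewrite Nat.add_0_r. rewrite Rmult_assoc. apply Rmult_le_compat_l; [apply P_nonneg; auto|].
    apply P_shift_le; auto.
  - apply ex_series_scal_r. apply (skel_ex (b*s) (Z.of_nat 0)) in H.
    eapply ex_series_ext; [|exact H]. intros n. cbv beta. rewrite pois_nat, <- Nat2Z.inj_add, pois_nat. reflexivity.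
Qed.

Lemma skel_summable b s : 0 <= b * s -> summableZ (skellam b s).
Proof.
  intros H.
  assert (A : ex_series (fun k => skellam b s (Z.of_nat k))).
  { apply (ex_series_le (V := R_CompleteNormedModule) _ (fun j => ((b*s) ^ j / INR (fact j)) * skellam b s 0)).
    - intros n. rewrite normR, Rabs_pos_eq by (apply skel_nonneg; auto). apply skel_bound; auto.
    - apply ex_series_scal_r, ex_series_exp. }
  split; auto.
  apply ex_series_incr_1 in A. eapply ex_series_ext; [|exact A].
  intros n. cbv beta. rewrite <- skel_sym. f_equal. lia.
Qed.

Definition Ee (j : nat) (m : nat) : R :=
  if Nat.even m then / (INR (fact (Nat.div2 m)) * INR (fact (Nat.div2 m + j))) else 0.
Definition Bc (j : nat) : nat -> R := PS_incr_n (Ee j) j.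
Definition Ac (k : nat) : R := 2 ^ k / INR (fact k).
Definition cc (n j : nat) : R := sum_f_R0 (fun k => Ac k * Bc j (n - k)) n.

Lemma Bc_spec j l : Bc j (j + 2 * l) = / (INR (fact l) * INR (fact (l + j))).
Proof.
  unfold Bc. rewrite PS_incr_n_simplify. destruct le_lt_dec; [|lia].
  replace (j + 2 * l - j)%nat with (2 * l)%nat by lia.
  unfold Ee. rewrite Nat.even_even, Nat.div2_double. reflexivity.
Qed.

Lemma Bc_zero j m : (forall l, m <> (j + 2 * l)%nat) -> Bc j m = 0.
Proof.
  intros H. unfold Bc. rewrite PS_incr_n_simplify. destruct le_lt_dec; [|reflexivity].
  unfold Ee. destruct (Nat.even (m - j)) eqn:He; [|reflexivity].
  apply Nat.even_spec in He. destruct He as [k Hk]. exfalso; apply (H k); lia.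
Qed.

Lemma Bc_dec j m : (exists l, m = (j + 2 * l)%nat) \/ (forall l, m <> (j + 2 * l)%nat).
Proof.
  destruct (le_lt_dec j m) as [Hjm|Hjm].
  - destruct (Nat.Even_or_Odd (m - j)) as [[k Hk]|[k Hk]].
    + left; exists k; lia.
    + right; intros l; lia.
  - right; intros; lia.
Qed.

Lemma Bc_nonneg j m : 0 <= Bc j m.
Proof.
  destruct (Bc_dec j m) as [[l ->]|H].
  - rewrite Bc_spec. left. apply Rinv_0_lt_compat, Rmult_lt_0_compat; apply INR_fact_pos.
  - rewrite Bc_zero by auto. lra.
Qed.

Lemma INR_fact_S n : INR (fact (S n)) = INR (S n) * INR (fact n).
Proof. change (fact (S n)) with (S n * fact n)%nat. apply mult_INR. Qed.

Lemma Bc_rec0 m : INR (S m) * Bc 0 (S m) = 2 * Bc 1 m.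
Proof.
  destruct (Bc_dec 0 (S m)) as [[l Hl]|H].
  - destruct l as [|l]; [lia|].
    assert (Hm : m = (1 + 2 * l)%nat) by lia.
    rewrite Hl, Bc_spec, Hm, Bc_spec. rewrite !Nat.add_0_r. replace (l + 1)%nat with (S l) by lia.
    rewrite INR_fact_S. replace (INR (0 + 2 * S l)) with (2 * INR (S l)) by (rewrite plus_INR, mult_INR; simpl; ring).
    pose proof (INR_fact_pos l). pose proof (pos_INR l). rewrite S_INR. field. lra.
  - rewrite !Bc_zero; [lra| |auto]. intros l Hl. apply (H (S l)). lia.
Qed.

Lemma Bc_rec j m : INR (S m) * Bc (S j) (S m) = Bc (S (S j)) m + Bc j m.
Proof.
  destruct (Bc_dec (S j) (S m)) as [[l Hl]|H].
  - assert (Hm : m = (j + 2 * l)%nat) by lia. subst m.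
    rewrite Hl, Bc_spec. rewrite Bc_spec.
    destruct l as [|l].
    + rewrite (Bc_zero (S (S j))) by (let l2 := fresh in intros l2; lia).
      rewrite !Nat.add_0_l, !Nat.add_0_r. rewrite INR_fact_S. simpl (fact 0). simpl (INR 1).
      pose proof (INR_fact_pos j). pose proof (pos_INR j). rewrite S_INR. field. lra.
    + replace (j + 2 * S l)%nat with (S (S j) + 2 * l)%nat by lia. rewrite Bc_spec.
      replace (l + S (S j))%nat with (S (S l + j)) by lia.
      replace (S l + S j)%nat with (S (S l + j)) by lia.
      rewrite !INR_fact_S.
      replace (INR (S j + 2 * S l)) with (INR (S l) + INR (S (S l + j))) by (rewrite <- plus_INR; f_equal; lia).
      pose proof (INR_fact_pos l). pose proof (INR_fact_pos (S l + j)).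
      pose proof (pos_INR l). pose proof (pos_INR (S l + j)).
      rewrite !S_INR. field. repeat split; lra.
  - rewrite Bc_zero by auto. rewrite !Bc_zero; [lra| |].
    + intros l Hl. apply (H l). lia.
    + intros l Hl. apply (H (S l)). lia.
Qed.

Lemma Ac_rec k : INR (S k) * Ac (S k) = 2 * Ac k.
Proof.
  unfold Ac. rewrite INR_fact_S. simpl (2 ^ S k). pose proof (INR_fact_pos k).
  pose proof (pos_INR k). rewrite S_INR. field. lra.
Qed.

Lemma cauchy_deriv (b : nat -> R) n :
  INR (S n) * sum_f_R0 (fun k => Ac k * b (S n - k)%nat) (S n) =
  2 * sum_f_R0 (fun k => Ac k * b (n - k)%nat) n +
  sum_f_R0 (fun k => Ac k * (INR (S (n - k)) * b (S (n - k)))) n.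
Proof.
  rewrite scal_sum.
  rewrite (sum_eq _ (fun k => INR k * Ac k * b (S n - k)%nat + INR (S n - k) * Ac k * b (S n - k)%nat)).
  2:{ intros i Hi. cbv beta. replace (INR (S n)) with (INR i + INR (S n - i)) by (rewrite <- plus_INR; f_equal; lia). ring. }
  rewrite plus_sum. f_equal.
  - rewrite decomp_sum by lia. simpl Init.Nat.pred. rewrite scal_sum.
    replace (INR 0 * Ac 0 * b (S n - 0)%nat) with 0 by (simpl; ring). rewrite Rplus_0_l.
    apply sum_eq. intros i Hi. cbv beta. replace (S n - S i)%nat with (n - i)%nat by lia.
    rewrite Ac_rec. ring.
  - rewrite tech5. replace (S n - S n)%nat with 0%nat by lia. simpl (INR 0). rewrite Rmult_0_l, Rmult_0_l, Rplus_0_r.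
    apply sum_eq. intros i Hi. replace (S n - i)%nat with (S (n - i)) by lia. ring.
Qed.

Lemma cc_rec j n : INR (S n) * cc (S n) (S j) = 2 * cc n (S j) + cc n (S (S j)) + cc n j.
Proof.
  unfold cc. rewrite cauchy_deriv. rewrite Rplus_assoc. f_equal.
  rewrite <- plus_sum. apply sum_eq. intros i Hi. rewrite Bc_rec. ring.
Qed.

Lemma cc_rec0 n : INR (S n) * cc (S n) 0 = 2 * cc n 0 + 2 * cc n 1.
Proof.
  unfold cc. rewrite cauchy_deriv. f_equal.
  rewrite scal_sum. apply sum_eq. intros i Hi. rewrite Bc_rec0. ring.
Qed.

Definition Dd n j := cc n j - cc n (S j).

Lemma Dd_S n j : Dd (S n) (S j) = (2 * Dd n (S j) + Dd n j + Dd n (S (S j))) / INR (S n).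
Proof.
  unfold Dd. pose proof (cc_rec j n). pose proof (cc_rec (S j) n).
  pose proof (pos_INR n). rewrite S_INR in *. field_simplify_eq; [|lra]. lra.
Qed.

Lemma Dd_S0 n : Dd (S n) 0 = (Dd n 0 + Dd n 1) / INR (S n).
Proof.
  unfold Dd. pose proof (cc_rec0 n). pose proof (cc_rec 0 n).
  pose proof (pos_INR n). rewrite S_INR in *. field_simplify_eq; [|lra]. lra.
Qed.

Lemma Dd_nonneg n : forall j, 0 <= Dd n j.
Proof.
  induction n; intros j.
  - unfold Dd, cc. simpl. rewrite (Bc_zero (S j) 0) by (intros; lia).
    pose proof (Bc_nonneg j 0). unfold Ac. simpl. lra.
  - pose proof (pos_INR n). destruct j.
    + rewrite Dd_S0. apply Rmult_le_pos; [pose proof (IHn 0%nat); pose proof (IHn 1%nat); lra|].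
      left; apply Rinv_0_lt_compat; rewrite S_INR; lra.
    + rewrite Dd_S. apply Rmult_le_pos; [pose proof (IHn j); pose proof (IHn (S j)); pose proof (IHn (S (S j))); lra|].
      left; apply Rinv_0_lt_compat; rewrite S_INR; lra.
Qed.

Lemma Dd_pos n : 0 < Dd n n.
Proof.
  induction n.
  - unfold Dd, cc. simpl. rewrite (Bc_zero 1 0) by (intros; lia).
    pose proof (Bc_spec 0 0) as E. simpl in E. rewrite E.
    unfold Ac. simpl. lra.
  - pose proof (pos_INR n). rewrite Dd_S.
    apply Rmult_lt_0_compat; [pose proof (Dd_nonneg n (S n)); pose proof (Dd_nonneg n (S (S n))); lra|].
    apply Rinv_0_lt_compat; rewrite S_INR; lra.
Qed.

Ltac req := match goal with |- @eq _ ?a ?b => change (@eq R a b) end.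

Lemma Ee_even j n : Ee j (2 * n) = / (INR (fact n) * INR (fact (n + j))).
Proof. unfold Ee. rewrite Nat.even_even, Nat.div2_double. reflexivity. Qed.

Lemma Ee_odd j n : Ee j (2 * n + 1) = 0.
Proof. unfold Ee. rewrite Nat.even_odd. reflexivity. Qed.

Lemma ex_even j x : ex_pseries (fun n => Ee j (2 * n)) (x ^ 2).
Proof.
  apply ex_pseries_R.
  apply (ex_series_le (V := R_CompleteNormedModule) _ (fun n => (x ^ 2) ^ n / INR (fact n))); [|apply ex_series_exp].
  intros n. rewrite normR, Ee_even. pose proof (INR_fact_pos n). pose proof (INR_fact_pos (n + j)).
  assert (1 <= INR (fact (n + j))) by (replace 1 with (INR 1) by reflexivity; apply le_INR, lt_O_fact).
  assert (0 <= (x ^ 2) ^ n) by (apply pow_le; nra).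
  rewrite Rabs_pos_eq.
  - unfold Rdiv. rewrite Rmult_comm. apply Rmult_le_compat_l; auto.
    rewrite Rinv_mult. rewrite <- (Rmult_1_r (/ INR (fact n))) at 2.
    apply Rmult_le_compat_l; [left; apply Rinv_0_lt_compat; auto|].
    rewrite <- Rinv_1. apply Rinv_le_contravar; lra.
  - apply Rmult_le_pos; auto. left; apply Rinv_0_lt_compat, Rmult_lt_0_compat; auto.
Qed.

Lemma ex_odd j x : ex_pseries (fun n => Ee j (2 * n + 1)) (x ^ 2).
Proof.
  apply ex_pseries_R. eapply ex_series_ext; [|exact ex_series_zero].
  intros n. cbv beta. rewrite Ee_odd. symmetry; apply Rmult_0_l.
Qed.

Lemma ex_Bc j x : ex_series (fun n => Bc j n * x ^ n).
Proof.
  apply ex_pseries_R. unfold Bc. apply ex_pseries_incr_n.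
  apply ex_pseries_odd_even; [apply ex_even | apply ex_odd].
Qed.

Lemma PSeries_Bc j x : PSeries (Bc j) x =
  x ^ j * Series (fun n => / (INR (fact n) * INR (fact (n + j))) * (x ^ 2) ^ n).
Proof.
  unfold Bc. rewrite PSeries_incr_n. f_equal.
  rewrite PSeries_odd_even by (apply ex_even || apply ex_odd).
  replace (PSeries (fun n => Ee j (2 * n + 1)) (x ^ 2)) with 0.
  - rewrite Rmult_0_r, Rplus_0_r. unfold PSeries. apply Series_ext. intros n. rewrite Ee_even. reflexivity.
  - unfold PSeries. symmetry. transitivity (Series (fun _ : nat => 0)); [|apply Series_zero].
    apply Series_ext. intros n. rewrite Ee_odd. ring.
Qed.

Lemma skel_as_Bc b s j : skellam b s (Z.of_nat j) =
  exp (- (b * s)) * exp (- (b * s)) * PSeries (Bc j) (b * s).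
Proof.
  rewrite skel_nat, PSeries_Bc. set (lam := b * s).
  rewrite <- Rmult_assoc, <- Series_scal_l. apply Series_ext. intros l.
  unfold P. rewrite pow_add.
  replace ((lam ^ 2) ^ l) with (lam ^ l * lam ^ l) by (rewrite <- Rpow_mult_distr; f_equal; ring).
  pose proof (INR_fact_pos l). pose proof (INR_fact_pos (l + j)).
  field. lra.
Qed.

Lemma Series_pos_strict a m : ex_series a -> (forall n, 0 <= a n) -> 0 < a m -> 0 < Series a.
Proof.
  intros E H Hm. rewrite (Series_incr_n a (S m)) by (lia || exact E). simpl Init.Nat.pred.
  pose proof (term_le_sum a m H).
  assert (0 <= Series (fun k => a (S m + k)%nat)).
  { apply Series_nonneg; [intros; apply H|]. now apply (ex_series_incr_n a (S m)). }
  lra.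
Qed.

Lemma cauchy_cc j x : 0 <= x ->
  is_series (fun n => cc n j * x ^ n) (Series (fun n => Ac n * x ^ n) * PSeries (Bc j) x).
Proof.
  intros Hx.
  assert (EA : ex_series (fun n => Ac n * x ^ n)).
  { eapply ex_series_ext; [|apply (ex_series_exp (2 * x))]. intros n. cbv beta. unfold Ac.
    req. rewrite Rpow_mult_distr. unfold Rdiv. ring. }
  pose proof (is_series_mult_pos (fun n => Ac n * x ^ n) (fun n => Bc j n * x ^ n) _ _
    (Series_correct _ EA) (Series_correct _ (ex_Bc j x))) as H.
  eapply is_series_ext; [|apply H].
  - intros n. req. unfold cc. rewrite Rmult_comm, scal_sum. apply sum_eq. intros i Hi.
    replace (x ^ n) with (x ^ i * x ^ (n - i)) by (rewrite <- pow_add; f_equal; lia). ring.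
  - intros n. apply Rmult_le_pos; [unfold Ac; unfold Rdiv; apply Rmult_le_pos;
      [apply pow_le; lra | left; apply Rinv_0_lt_compat, INR_fact_pos] | apply pow_le; auto].
  - intros n. apply Rmult_le_pos; [apply Bc_nonneg | apply pow_le; auto].
Qed.

Lemma PSeries_Bc_strict j x : 0 < x -> PSeries (Bc (S j)) x < PSeries (Bc j) x.
Proof.
  intros Hx.
  pose proof (cauchy_cc j x ltac:(lra)) as H1.
  pose proof (cauchy_cc (S j) x ltac:(lra)) as H2.
  pose proof (is_series_minus _ _ _ _ H1 H2) as H3.
  set (la := Series (fun n => Ac n * x ^ n)) in *.
  assert (E : Series (fun n => Dd n j * x ^ n) = la * PSeries (Bc j) x - la * PSeries (Bc (S j)) x).
  { apply is_series_unique. eapply is_series_ext; [|exact H3].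
    intros n. unfold Dd. unfold plus, opp; simpl. req. ring. }
  assert (Hla : 0 <= la).
  { apply Series_nonneg.
    - intros n. unfold Ac, Rdiv. apply Rmult_le_pos; [apply Rmult_le_pos;
        [apply pow_le; lra | left; apply Rinv_0_lt_compat, INR_fact_pos] | apply pow_le; lra].
    - eapply ex_series_ext; [|apply (ex_series_exp (2 * x))]. intros n. cbv beta. unfold Ac.
      req. rewrite Rpow_mult_distr. unfold Rdiv. ring. }
  assert (Hpos : 0 < Series (fun n => Dd n j * x ^ n)).
  { apply (Series_pos_strict _ j).
    - eexists. eapply is_series_ext; [|exact H3]. intros n. unfold Dd, plus, opp; simpl. req. ring.
    - intros n. apply Rmult_le_pos; [apply Dd_nonneg | apply pow_le; lra].
    - apply Rmult_lt_0_compat; [apply Dd_pos | apply pow_lt; lra]. }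
  nra.
Qed.

Lemma skel_strict b s j : 0 < b * s ->
  skellam b s (Z.of_nat (S j)) < skellam b s (Z.of_nat j).
Proof.
  intros H. rewrite !skel_as_Bc. pose proof (exp_pos (- (b*s))).
  apply Rmult_lt_compat_l; [nra|]. apply PSeries_Bc_strict; auto.
Qed.


Lemma skel_chain b s m k : 0 < b * s ->
  skellam b s (Z.of_nat (m + S k)) < skellam b s (Z.of_nat m).
Proof.
  intros H. induction k.
  - rewrite Nat.add_1_r. apply skel_strict; auto.
  - eapply Rlt_trans; [|exact IHk]. replace (m + S (S k))%nat with (S (m + S k)) by lia.
    apply skel_strict; auto.
Qed.

Lemma skel_absnat b s u : skellam b s u = skellam b s (Z.of_nat (Z.abs_nat u)).
Proof.
  destruct (Z_le_gt_dec 0 u).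
  - f_equal. lia.
  - rewrite <- skel_sym. f_equal. lia.
Qed.

Lemma skel_abs_lt b s u v : 0 < b * s -> (Z.abs u < Z.abs v)%Z -> skellam b s v < skellam b s u.
Proof.
  intros H Huv. rewrite (skel_absnat b s u), (skel_absnat b s v).
  replace (Z.abs_nat v) with (Z.abs_nat u + S (Z.abs_nat v - Z.abs_nat u - 1))%nat by lia.
  apply skel_chain; auto.
Qed.

Lemma skel_pos b s u : 0 < b * s -> 0 < skellam b s u.
Proof.
  intros H. pose proof (skel_abs_lt b s u (Z.abs u + 1) H ltac:(lia)).
  pose proof (skel_nonneg b s (Z.abs u + 1) ltac:(lra)). lra.
Qed.

Lemma summableZ_zero : summableZ (fun _ => 0).
Proof. split; apply ex_series_zero. Qed.

Lemma sumZ_zero : sumZ (fun _ => 0) = 0.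
Proof. unfold sumZ. rewrite Series_zero. ring. Qed.

Definition hh (g : Z -> R) (lo hi : zbar) (y : Z) : R :=
  sumZ (fun z => if inI lo hi z then g (z - y)%Z else 0).

Lemma hh_summable g lo hi y : summableZ g -> (forall z, 0 <= g z) ->
  summableZ (fun z => if inI lo hi z then g (z - y)%Z else 0).
Proof.
  intros Sg Pg. destruct (shiftZ (- y) g Sg) as [S1 _].
  apply (summableZ_le _ _ S1). intros z. destruct (inI lo hi z).
  - rewrite Rabs_pos_eq by auto. right. f_equal.
  - rewrite Rabs_R0. apply Pg.
Qed.

Lemma hh_step_gen g lo hi y (F : Z -> R) : summableZ g -> (forall z, 0 <= g z) ->
  (forall z, (if inI lo hi (z + 1) then g (z - y)%Z else 0) - (if inI lo hi z then g (z - y)%Z else 0) = F z) ->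
  hh g lo hi (y + 1) - hh g lo hi y = sumZ F.
Proof.
  intros Sg Pg HF. unfold hh.
  destruct (shiftZ 1 _ (hh_summable g lo hi (y + 1) Sg Pg)) as [S1 E1].
  rewrite <- E1. rewrite <- sumZ_minus; [| |apply hh_summable; auto].
  - apply sumZ_ext. intros z. rewrite <- HF. cbv beta. replace (z + 1 - (y + 1))%Z with (z - y)%Z by lia. reflexivity.
  - exact S1.
Qed.

Lemma point_ext g c y : sumZ (fun z => if Z.eqb z c then g (z - y)%Z else 0) = g (c - y)%Z.
Proof.
  transitivity (sumZ (fun z => if Z.eqb z c then g (c - y)%Z else 0)); [|apply sumZ_point].
  apply sumZ_ext. intros z. cbv beta.
  destruct (Z.eqb_spec z c) as [->|]; reflexivity.
Qed.

Lemma point_summable g c y : summableZ (fun z => if Z.eqb z c then g (z - y)%Z else 0).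
Proof.
  eapply summableZ_ext; [|apply (summableZ_point c (g (c - y)%Z))]. intros z. cbv beta.
  destruct (Z.eqb_spec z c) as [->|]; reflexivity.
Qed.

Lemma hh_step_ff g x Y y : summableZ g -> (forall z, 0 <= g z) -> (x < Y)%Z ->
  hh g (ZFin x) (ZFin Y) (y + 1) - hh g (ZFin x) (ZFin Y) y = g (x - 1 - y)%Z - g (Y - 1 - y)%Z.
Proof.
  intros Sg Pg Hxy.
  rewrite (hh_step_gen g _ _ y (fun z => (if Z.eqb z (x - 1) then g (z - y)%Z else 0) -
                                        (if Z.eqb z (Y - 1) then g (z - y)%Z else 0))); auto.
  - rewrite sumZ_minus by apply point_summable. rewrite !point_ext. reflexivity.
  - intros z. unfold inI.
    destruct (Z.leb_spec x (z + 1)), (Z.ltb_spec (z + 1) Y), (Z.leb_spec x z), (Z.ltb_spec z Y),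
      (Z.eqb_spec z (x - 1)), (Z.eqb_spec z (Y - 1)); simpl; try lia; ring.
Qed.

Lemma hh_step_nf g Y y : summableZ g -> (forall z, 0 <= g z) ->
  hh g ZNinf (ZFin Y) (y + 1) - hh g ZNinf (ZFin Y) y = - g (Y - 1 - y)%Z.
Proof.
  intros Sg Pg.
  rewrite (hh_step_gen g _ _ y (fun z => 0 - (if Z.eqb z (Y - 1) then g (z - y)%Z else 0))); auto.
  - rewrite sumZ_minus by (apply point_summable || apply summableZ_zero).
    rewrite point_ext, sumZ_zero. ring.
  - intros z. unfold inI.
    destruct (Z.ltb_spec (z + 1) Y), (Z.ltb_spec z Y), (Z.eqb_spec z (Y - 1)); simpl; try lia; ring.
Qed.

Lemma hh_step_fp g x y : summableZ g -> (forall z, 0 <= g z) ->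
  hh g (ZFin x) ZPinf (y + 1) - hh g (ZFin x) ZPinf y = g (x - 1 - y)%Z.
Proof.
  intros Sg Pg.
  rewrite (hh_step_gen g _ _ y (fun z => (if Z.eqb z (x - 1) then g (z - y)%Z else 0))); auto.
  - apply point_ext.
  - intros z. unfold inI.
    destruct (Z.leb_spec x (z + 1)), (Z.leb_spec x z), (Z.eqb_spec z (x - 1)); simpl; try lia; ring.
Qed.

Lemma hh_sym g x Y z0 : summableZ g -> (forall z, 0 <= g z) -> (forall z, g (- z)%Z = g z) ->
  hh g (ZFin x) (ZFin Y) z0 = hh g (ZFin x) (ZFin Y) (x + Y - 1 - z0)%Z.
Proof.
  intros Sg Pg Gs. unfold hh.
  destruct (reflZ (x + Y - 1) _ (hh_summable g (ZFin x) (ZFin Y) (x + Y - 1 - z0) Sg Pg)) as [_ E].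
  rewrite <- E. apply sumZ_ext. intros w. unfold inI.
  destruct (Z.leb_spec x w), (Z.ltb_spec w Y), (Z.leb_spec x (x + Y - 1 - w)), (Z.ltb_spec (x + Y - 1 - w) Y);
    simpl; try lia; try reflexivity.
  rewrite <- Gs. f_equal. lia.
Qed.

Lemma incr_steps (H : Z -> R) y1 y2 : (y1 < y2)%Z ->
  (forall w, (y1 <= w < y2)%Z -> H w < H (w + 1)%Z) -> H y1 < H y2.
Proof.
  intros Hlt Hs.
  assert (Gen : forall d : nat, (forall w, (y1 <= w < y1 + Z.of_nat (S d))%Z -> H w < H (w + 1)%Z) ->
                  H y1 < H (y1 + Z.of_nat (S d))%Z).
  { induction d; intros Hw.
    - replace (y1 + Z.of_nat 1)%Z with (y1 + 1)%Z by lia. apply Hw; lia.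
    - eapply Rlt_trans; [apply IHd; intros; apply Hw; lia|].
      replace (y1 + Z.of_nat (S (S d)))%Z with (y1 + Z.of_nat (S d) + 1)%Z by lia. apply Hw; lia. }
  replace y2 with (y1 + Z.of_nat (S (Z.to_nat (y2 - y1 - 1))))%Z by lia.
  apply Gen. intros; apply Hs; lia.
Qed.

Lemma zle_fin u v : zle (ZFin u) (ZFin v) -> (u <= v)%Z.
Proof. intros [H|H]; simpl in H; [lia| injection H; lia]. Qed.

Lemma zle_fin_ninf u : ~ zle (ZFin u) ZNinf.
Proof. intros [H|H]; [simpl in H; auto | discriminate]. Qed.

Lemma zle_pinf_fin u : ~ zle ZPinf (ZFin u).
Proof. intros [H|H]; [simpl in H; auto | discriminate]. Qed.

Theorem lemma5p2 (beta : R) (N : nat) (a : nat -> zbar)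
  (Hbeta : 0 < beta)
  (HN : (2 <= N)%nat)
  (Ha1 : a 1%nat = ZNinf)
  (HaN : a (S N) = ZPinf)
  (Hincr : forall n, (1 <= n <= N)%nat -> zlt (a n) (a (S n)))
  (Hmid : forall n x y, (1 <= n <= N)%nat -> a n = ZFin x -> a (S n) = ZFin y ->
          Z.odd (x + y - 1) = true) :
  forall n, (1 <= n <= N)%nat ->
    (* (i) symmetry about m_n (only meaningful when m_n is finite) *)
    (forall x y, a n = ZFin x -> a (S n) = ZFin y ->
       (forall (z : Z) (t : R), 0 <= t <= 1 ->
          h beta a n z t = h beta a n (x + y - 1 - z)%Z t) /\
       (forall t : R, 0 <= t <= 1 ->
          h beta a n ((x + y) / 2)%Z t = h beta a n ((x + y - 2) / 2)%Z t)) /\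
    (* (ii) strict monotonicity, for t in [0,1) *)
    (forall t : R, 0 <= t < 1 ->
       (forall y1 y2 : Z, (y1 < y2)%Z -> zle (ZFin y2) (m_low a n) ->
          h beta a n y1 t < h beta a n y2 t) /\
       (forall y1 y2 : Z, (y1 < y2)%Z -> zle (m_up a n) (ZFin y1) ->
          h beta a n y2 t < h beta a n y1 t)).
Proof.
  intros n Hn.
  assert (Hsum : forall t, 0 <= t <= 1 -> summableZ (skellam beta (1 - t)))
    by (intros; apply skel_summable; nra).
  assert (Hnn : forall t, 0 <= t <= 1 -> forall z, 0 <= skellam beta (1 - t) z)
    by (intros; apply skel_nonneg; nra).
  assert (Hsy : forall t z, skellam beta (1 - t) (- z) = skellam beta (1 - t) z)
    by (intros; apply skel_sym).
  assert (Hh : forall y t, h beta a n y t = hh (skellam beta (1 - t)) (a n) (a (S n)) y)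
    by reflexivity.
  split.
  - intros x y Hx Hy. split.
    + intros z t Ht. rewrite !Hh, Hx, Hy. apply hh_sym; auto.
    + intros t Ht. pose proof (Hmid n x y Hn Hx Hy) as Ho.
      apply Z.odd_spec in Ho. destruct Ho as [k Hk].
      assert (E1 : ((x + y) / 2 = k + 1)%Z).
      { replace (x + y)%Z with ((k + 1) * 2)%Z by lia. apply Z.div_mul; lia. }
      assert (E2 : ((x + y - 2) / 2 = k)%Z).
      { replace (x + y - 2)%Z with (k * 2)%Z by lia. apply Z.div_mul; lia. }
      replace ((x + y) / 2)%Z with (x + y - 1 - (x + y - 2) / 2)%Z by lia.
      rewrite !Hh, Hx, Hy. symmetry. apply hh_sym; auto.
  - intros t Ht.
    assert (Ht' : 0 <= t <= 1) by lra.
    assert (Hl : 0 < beta * (1 - t)) by nra.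
    set (g := skellam beta (1 - t)) in *.
    assert (Hcase : (a n = ZNinf /\ exists Y, a (S n) = ZFin Y) \/
                    (exists x, a n = ZFin x /\ a (S n) = ZPinf) \/
                    (exists x Y, a n = ZFin x /\ a (S n) = ZFin Y /\ (x < Y)%Z /\
                                 Z.odd (x + Y - 1) = true)).
    { pose proof (Hincr n Hn) as Hi.
      destruct (a n) eqn:E1; destruct (a (S n)) eqn:E2; simpl in Hi; try contradiction.
      - left; split; eauto.
      - exfalso. destruct (Nat.eq_dec n 1) as [->|Hn1].
        + pose proof (Hincr 2%nat ltac:(lia)) as H2. rewrite E2 in H2. simpl in H2. exact H2.
        + pose proof (Hincr (n - 1)%nat ltac:(lia)) as H2.
          replace (S (n - 1)) with n in H2 by lia. rewrite E1 in H2. destruct (a (n - 1)%nat); simpl in H2; auto.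
      - right; right. exists z, z0. repeat split; auto. eapply Hmid; eauto.
      - right; left. eauto. }
    split.
    + intros y1 y2 H12 Hz. rewrite !Hh. fold g.
      destruct Hcase as [[E1 [Y E2]]|[[x [E1 E2]]|[x [Y [E1 [E2 [Hxy Ho]]]]]]].
      * exfalso. unfold m_low in Hz. rewrite E1 in Hz. exact (zle_fin_ninf _ Hz).
      * rewrite E1, E2. apply incr_steps; auto. intros w Hw. cbv beta.
        pose proof (hh_step_fp g x w (Hsum t Ht') (Hnn t Ht')).
        pose proof (skel_pos beta (1 - t) (x - 1 - w) Hl). fold g in H0. lra.
      * unfold m_low in Hz. rewrite E1, E2 in Hz. apply zle_fin in Hz.
        apply Z.odd_spec in Ho. destruct Ho as [k Hk].
        assert (E3 : ((x + Y - 2) / 2 = k)%Z).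
        { replace (x + Y - 2)%Z with (k * 2)%Z by lia. apply Z.div_mul; lia. }
        rewrite E3 in Hz.
        rewrite E1, E2. apply incr_steps; auto. intros w Hw. cbv beta.
        pose proof (hh_step_ff g x Y w (Hsum t Ht') (Hnn t Ht') Hxy).
        pose proof (skel_abs_lt beta (1 - t) (x - 1 - w) (Y - 1 - w) Hl ltac:(lia)).
        fold g in H0. lra.
    + intros y1 y2 H12 Hz. rewrite !Hh. fold g.
      destruct Hcase as [[E1 [Y E2]]|[[x [E1 E2]]|[x [Y [E1 [E2 [Hxy Ho]]]]]]].
      * rewrite E1, E2.
        apply (incr_steps (fun y => - hh g ZNinf (ZFin Y) y)) in H12; [lra|]. intros w Hw. cbv beta.
        pose proof (hh_step_nf g Y w (Hsum t Ht') (Hnn t Ht')).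
        pose proof (skel_pos beta (1 - t) (Y - 1 - w) Hl). fold g in H0. lra.
      * exfalso. unfold m_up in Hz. rewrite E1, E2 in Hz. exact (zle_pinf_fin _ Hz).
      * unfold m_up in Hz. rewrite E1, E2 in Hz. apply zle_fin in Hz.
        apply Z.odd_spec in Ho. destruct Ho as [k Hk].
        assert (E3 : ((x + Y) / 2 = k + 1)%Z).
        { replace (x + Y)%Z with ((k + 1) * 2)%Z by lia. apply Z.div_mul; lia. }
        rewrite E3 in Hz.
        rewrite E1, E2.
        apply (incr_steps (fun y => - hh g (ZFin x) (ZFin Y) y)) in H12; [lra|]. intros w Hw. cbv beta.
        pose proof (hh_step_ff g x Y w (Hsum t Ht') (Hnn t Ht') Hxy).
        pose proof (skel_abs_lt beta (1 - t) (Y - 1 - w) (x - 1 - w) Hl ltac:(lia)).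
        fold g in H0. lra.
Qed.
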